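(* For all $h\ge1$ and $i_1,\dots,i_h,j_1,\dots,j_h\in\{1,\dots,n\}$, $\mathcal K\big([i_1,\dots,i_h|j_1,\dots,j_h]^*\big)=(i_1|j_1)(i_2|j_2)\cdots(i_h|j_h)\in\mathbb{C}[M_{n,n}]$.
   Context: $\mathbb{C}[M_{n,n}]$ is the polynomial algebra in commuting indeterminates $(i|j)$, $1\le i,j\le n$. $D^l_{ij}$ is the derivation of $\mathbb{C}[M_{n,n}]$ with $D^l_{ij}((h|k))=\delta_{jh}(i|k)$. Let $\rho_{ij}(\mathbf p)=D^l_{ij}(\mathbf p)+(i|j)\mathbf p$; the map $e_{ij}\mapsto\rho_{ij}$ extends to an algebra morphism $\tau:\mathbf{U}(gl(n))\to\mathrm{End}_{\mathbb C}(\mathbb{C}[M_{n,n}])$. The Koszul map is the linear map $\mathcal K:\mathbf{U}(gl(n))\to\mathbb{C}[M_{n,n}]$, $\mathcal K(\mathbf P)=\tau(\mathbf P)(1)$. Virtual variables: $A_0=\{\alpha_1,\dots,\alpha_{m_0}\}$ (parity $0$), $A_1=\{\beta_1,\dots,\beta_{m_1}\}$ (parity $1$), $L=\{1,\dots,n\}$ (parity $1$), $m_0,m_1$ large; $gl(m_0|m_1+n)$ has homogeneous basis $e_{a,b}$ of parity $|a|+|b|$ and superbracket $[e_{a,b},e_{c,d}]=\delta_{bc}e_{a,d}-(-1)^{(|a|+|b|)(|c|+|d|)}\delta_{ad}e_{c,b}$, with $\mathbf{U}(gl(n))\subset\mathbf{U}(gl(m_0|m_1+n))$. A product $e_{a_m,b_m}\cdots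 e_{a_1,b_1}$ is irregular if for some $i\le m$ and virtual $\gamma$, $\#\{j\le i:b_j=\gamma\}>\#\{j<i:a_j=\gamma\}$; $\mathbf{Irr}$ is the left ideal they generate; it is known $Virt=\mathbf{U}(gl(n))\oplus\mathbf{Irr}$ is a subalgebra with $\mathbf{Irr}$ a two-sided ideal, and $\mathfrak p$ is the projection $Virt\to\mathbf{U}(gl(n))$ with kernel $\mathbf{Irr}$. The column Capelli *-bitableau is $[i_1,\dots,i_h|j_1,\dots,j_h]^*=\mathfrak p(e_{i_1\beta_1}\cdots e_{i_h\beta_h}e_{\beta_1j_1}\cdots e_{\beta_hj_h})$ with distinct negative virtual $\beta_1,\dots,\beta_h$. *)

(* Defs.v *)
From HB Require Import structures.
From mathcomp Require Import all_boot all_order all_algebra all_field.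
Set Implicit Arguments. Unset Strict Implicit. Unset Printing Implicit Defensive.
Import Order.TTheory GRing.Theory Num.Theory.
Local Open Scope ring_scope.

(* The polynomial algebra C[M_{n,n}] in the indeterminates (i|j).      *)
(* A monomial is an exponent function on 'I_n * 'I_n; a polynomial is  *)
(* represented by a finite list of terms (coefficient, monomial); two  *)
(* representations denote the same polynomial iff they have the same   *)
(* coefficient [pcoef] at every monomial.                              *)
Definition monom (n : nat) := {ffun 'I_n * 'I_n -> nat}.
Definition cpoly (n : nat) := seq (algC * monom n).

Definition pcoef n (p : cpoly n) (m : monom n) : algC :=
  \sum_(t <- p | t.2 == m) t.1.

Definition pone n : cpoly n := [:: (1, [ffun => 0%N] : monom n)].

Definition pmulvar n (ij : 'I_n * 'I_n) (p : cpoly n) : cpoly n :=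
  [seq (t.1, [ffun k => (t.2 k + (k == ij))%N] : monom n) | t : algC * monom n <- p].

(* the derivation D^l_{ij}: D^l_{ij}((h|k)) = delta_{jh} (i|k);
   on a monomial x^m: D^l_{ij}(x^m) = sum_k m_{jk} x^(m - e_{jk} + e_{ik}) *)
Definition pDl n (ij : 'I_n * 'I_n) (p : cpoly n) : cpoly n :=
  flatten [seq [seq (t.1 * (t.2 (ij.2, k))%:R,
                     [ffun x => (t.2 x - (x == (ij.2, k)) + (x == (ij.1, k)))%N] : monom n)
               | k <- enum 'I_n] | t : algC * monom n <- p].

Definition rho n (ij : 'I_n * 'I_n) (p : cpoly n) : cpoly n :=
  pDl ij p ++ pmulvar ij p.

Definition pscale n (c : algC) (p : cpoly n) : cpoly n :=
  [seq (c * t.1, t.2) | t <- p].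

(* Elements of U(gl(n)) are represented by formal linear combinations
   of words; the word [:: e_{a_m b_m}; ...; e_{a_1 b_1}] (left to right)
   is the product e_{a_m b_m} ... e_{a_1 b_1}. *)
Definition gl_elt (n : nat) := seq (algC * seq ('I_n * 'I_n)).

(* tau(word)(1), then the Koszul map K(P) = tau(P)(1), extended linearly *)
Definition tau_one n (w : seq ('I_n * 'I_n)) : cpoly n := foldr (@rho n) (pone n) w.
Definition koszul n (P : gl_elt n) : cpoly n :=
  flatten [seq pscale t.1 (tau_one t.2) | t <- P].

(* Indices: inl = positive virtual alpha (parity 0),                   *)
(*          inr (inl _) = negative virtual beta (parity 1),            *)
(*          inr (inr _) = proper symbol in L (parity 1).               *)
Definition vidx (m0 m1 n : nat) := ('I_m0 + ('I_m1 + 'I_n))%type.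

Definition parity m0 m1 n (a : vidx m0 m1 n) : nat :=
  match a with inl _ => 0%N | inr _ => 1%N end.

Definition is_virtual m0 m1 n (a : vidx m0 m1 n) : bool :=
  match a with inl _ => true | inr (inl _) => true | inr (inr _) => false end.

Definition alpha m0 m1 n (k : 'I_m0) : vidx m0 m1 n := inl k.
Definition beta m0 m1 n (k : 'I_m1) : vidx m0 m1 n := inr (inl k).
Definition prop m0 m1 n (k : 'I_n) : vidx m0 m1 n := inr (inr k).

Definition letter m0 m1 n := (vidx m0 m1 n * vidx m0 m1 n)%type.

(* elements of the free associative algebra on the e_{a,b}: formal
   linear combinations of words (left-to-right product) *)
Definition fa m0 m1 n := seq (algC * seq (letter m0 m1 n)).

Definition fcoef m0 m1 n (x : fa m0 m1 n) (w : seq (letter m0 m1 n)) : algC :=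
  \sum_(t <- x | t.2 == w) t.1.

Definition kron (b : bool) : algC := if b then 1 else 0.

(* the defining relator of U(gl(m0|m1+n)):
   e_ab e_cd - (-1)^{(|a|+|b|)(|c|+|d|)} e_cd e_ab - [e_ab, e_cd],
   [e_ab, e_cd] = delta_bc e_ad - (-1)^{(|a|+|b|)(|c|+|d|)} delta_ad e_cb *)
Definition relator m0 m1 n (a b c d : vidx m0 m1 n) : fa m0 m1 n :=
  let s : algC := (-1) ^+ ((parity a + parity b) * (parity c + parity d)) in
  [:: (1, [:: (a, b); (c, d)]);
      (- s, [:: (c, d); (a, b)]);
      (- kron (b == c), [:: (a, d)]);
      (s * kron (a == d), [:: (c, b)])].

Definition sandwich m0 m1 n (u : seq (letter m0 m1 n)) (r : fa m0 m1 n)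
  (v : seq (letter m0 m1 n)) : fa m0 m1 n :=
  [seq (t.1, u ++ t.2 ++ v) | t <- r].

(* For the word w = [:: e_{a_m b_m}; ...; e_{a_1 b_1}]
   let s = rev w, so that nth s (k-1) = e_{a_k b_k}.  The product is
   irregular iff for some i <= m and virtual gamma,
   #{j <= i : b_j = gamma} > #{j < i : a_j = gamma}. *)
Definition irregular m0 m1 n (w : seq (letter m0 m1 n)) : Prop :=
  let s := rev w in
  exists (i : nat) (g : vidx m0 m1 n),
    [/\ (1 <= i <= size s)%N, is_virtual g &
        (count (fun l => l.1 == g) (take i.-1 s) <
         count (fun l => l.2 == g) (take i s))%N].

(* generators (as a linear span) of the kernel of the composite
   free algebra -> U(gl(m0|m1+n)) -> U / Irr :
   two-sided ideal of the relators, plus the left ideal generated by the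
   irregular monomials *)
Definition ker_gen m0 m1 n (r : fa m0 m1 n) : Prop :=
  (exists u v (a b c d : vidx m0 m1 n), r = sandwich u (relator a b c d) v)
  \/ (exists u w, irregular w /\ r = [:: (1, u ++ w)]).

Definition in_span m0 m1 n (G : fa m0 m1 n -> Prop) (x : fa m0 m1 n) : Prop :=
  exists gs : seq (algC * fa m0 m1 n),
    (forall g, g \in gs -> G g.2) /\
    (forall w, fcoef x w = \sum_(g <- gs) g.1 * fcoef g.2 w).

Definition embed m0 m1 n (P : gl_elt n) : fa m0 m1 n :=
  [seq (t.1, [seq (@prop m0 m1 n l.1, @prop m0 m1 n l.2) | l <- t.2]) | t <- P].

Definition fa_sub_word m0 m1 n (X : seq (letter m0 m1 n)) (P : gl_elt n) : fa m0 m1 n :=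
  (1, X) :: [seq (- t.1, t.2) | t <- @embed m0 m1 n P].

Definition capelli_word m0 m1 n h (i j : 'I_h -> 'I_n) (b : 'I_h -> 'I_m1)
  : seq (letter m0 m1 n) :=
  [seq (@prop m0 m1 n (i k), @beta m0 m1 n (b k)) | k <- enum 'I_h] ++
  [seq (@beta m0 m1 n (b k), @prop m0 m1 n (j k)) | k <- enum 'I_h].

(* P is a representative of p(X): P in U(gl(n)) and X - P in Irr *)
Definition proj_rep m0 m1 n (X : seq (letter m0 m1 n)) (P : gl_elt n) : Prop :=
  in_span (@ker_gen m0 m1 n) (fa_sub_word X P).

Definition diag_monom n h (i j : 'I_h -> 'I_n) : cpoly n :=
  foldr (fun k p => pmulvar (i k, j k) p) (pone n) (enum 'I_h).

(* Main.v *)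
Require Import Defs.
From mathcomp Require Import all_boot all_order all_algebra all_field.
From Stdlib Require Import FunctionalExtensionality.
From mathcomp Require Import ring zify.
Set Implicit Arguments. Unset Strict Implicit. Unset Printing Implicit Defensive.
Import Order.TTheory GRing.Theory Num.Theory.
Local Open Scope ring_scope.

Section Model.
Variables m0 m1 n : nat.
Local Notation T := (vidx m0 m1 n * 'I_n)%type.
Local Notation K := {ffun T -> nat}.
Local Notation V := (K -> algC).

Definition pv (t : T) : bool := if t.1 is inl _ then true else false.
Definition incr (k : K) (t : T) : K := [ffun u => (k u + (u == t))%N].
Definition decr (k : K) (t : T) : K := [ffun u => (k u - (u == t))%N].
Definition rk (t : T) : nat := enum_rank t.
Definition cb (u t : T) : bool := pv u && (rk u < rk t)%N.
Definition sc (t : T) (k : K) : nat := (\sum_(u : T) cb u t * k u)%N.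
Definition sg t k : algC := (-1) ^+ sc t k.
Definition wz t (k : K) : algC :=
  if pv t then (odd (k t))%:R * sg t k else (0 < k t)%N%:R.
Definition wd t (k : K) : algC :=
  if pv t then (~~ odd (k t))%:R * sg t k else (k t).+1%:R.
Definition zz t (f : V) : V := fun k => wz t k * f (decr k t).
Definition dd t (f : V) : V := fun k => wd t k * f (incr k t).

Lemma incrE (k : K) (t u : T) : incr k t u = (k u + (u == t))%N. Proof. by rewrite ffunE. Qed.
Lemma decrE (k : K) (t u : T) : decr k t u = (k u - (u == t))%N. Proof. by rewrite ffunE. Qed.

Lemma decr_incr (k : K) (t : T) : decr (incr k t) t = k.
Proof. by apply/ffunP=> u; rewrite !ffunE addnK. Qed.
Lemma incr_decr (k : K) (t : T) : (0 < k t)%N -> incr (decr k t) t = k.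
Proof.
move=> kt; apply/ffunP=> u; rewrite !ffunE; case: eqP=> [->|_]; last by rewrite subn0 addn0.
by rewrite subnK.
Qed.
Lemma incr_decrC (k : K) (t u : T) : t != u -> decr (incr k u) t = incr (decr k t) u.
Proof.
move=> tu; apply/ffunP=> x; rewrite !ffunE.
case: (x =P t) => [xt|_]; case: (x =P u) => [xu|_] /=.
- by move: tu; rewrite -xt -xu eqxx.
all: by rewrite ?addn0 ?subn0.
Qed.
Lemma decrC (k : K) (t u : T) : decr (decr k t) u = decr (decr k u) t.
Proof. by apply/ffunP=> x; rewrite !ffunE subnAC. Qed.
Lemma incrC (k : K) (t u : T) : incr (incr k t) u = incr (incr k u) t.
Proof. by apply/ffunP=> x; rewrite !ffunE addnAC. Qed.
Lemma incr_ne (k : K) (t u : T) : t != u -> incr k t u = k u.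
Proof. by move=> tu; rewrite ffunE eq_sym (negbTE tu) addn0. Qed.
Lemma decr_ne (k : K) (t u : T) : t != u -> decr k t u = k u.
Proof. by move=> tu; rewrite ffunE eq_sym (negbTE tu) subn0. Qed.
Lemma incr_eq (k : K) (t : T) (k' : K) : (incr k t == k') = (0 < k' t)%N && (k == decr k' t).
Proof.
apply/eqP/andP=> [<-|[kt /eqP ->]]; last exact: incr_decr.
by rewrite decr_incr incrE eqxx addn1.
Qed.

Lemma sc_incr (t : T) (k : K) (v : T) : sc t (incr k v) = (sc t k + cb v t)%N.
Proof.
rewrite /sc (eq_bigr (fun u => cb u t * k u + cb u t * (u == v)))%N; last first.
  by move=> u _; rewrite ffunE mulnDr.
rewrite big_split /=; congr (_ + _)%N.
rewrite (bigD1 v) //= eqxx muln1 big1 ?addn0 // => u /negbTE ->; by rewrite muln0.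
Qed.

Lemma sg_incr (t : T) (k : K) (v : T) : sg t (incr k v) = sg t k * (-1) ^+ cb v t.
Proof. by rewrite /sg sc_incr exprD. Qed.
Lemma sg_decr (t : T) (k : K) (v : T) : (0 < k v)%N -> sg t k = sg t (decr k v) * (-1) ^+ cb v t.
Proof. by move=> kv; rewrite -sg_incr incr_decr. Qed.
Lemma sg_sq (t : T) (k : K) : sg t k * sg t k = 1.
Proof. by rewrite /sg -exprD -signr_odd oddD addbb. Qed.

Lemma cb_tri (u t : T) : u != t -> pv u -> pv t -> cb u t (+) cb t u.
Proof.
move=> ut pu pt; rewrite /cb pu pt /=.
have: rk u != rk t.
  by apply: contra ut => /eqP/val_inj/enum_rank_inj ->.
case: ltngtP => //= _ _; rewrite ltnNge; case: ltngtP => //.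
Qed.

Lemma cbxx (u : T) : cb u u = false. Proof. by rewrite /cb ltnn andbF. Qed.
Lemma wz0 (t : T) (k : K) : k t = 0%N -> wz t k = 0.
Proof. by rewrite /wz => ->; case: pv; rewrite ?mul0r. Qed.

Lemma R1p (f : V) (u t : T) (k : K) :
  dd u (zz t f) k = (u == t)%:R * f k + (-1) ^+ (pv u && pv t) * zz t (dd u f) k.
Proof.
rewrite /dd /zz.
case: (eqVneq u t) => [<-|ut].
- rewrite decr_incr mul1r.
  case: (posnP (k u)) => [k0|kpos].
  + rewrite (wz0 k0) mul0r mulr0 addr0 /wd /wz incrE eqxx k0 /= sg_incr cbxx expr0 mulr1.
    by case: (pv u) => /=; [rewrite /sg -signr_odd; case: odd => /=|]; ring.
  + rewrite incr_decr // /wd /wz incrE eqxx decrE eqxx sg_incr cbxx expr0 mulr1.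
    rewrite (sg_decr u kpos) cbxx expr0 mulr1 andbb.
    move: kpos; case: (k u) => // c _; rewrite addn1 subn1 /=.
    case: (pv u) => /=.
      rewrite negbK /sg -signr_odd; case: (odd (sc u (decr k u))); case: (odd c) => /=; ring.
    ring.
- rewrite mul0r add0r incr_decrC 1?eq_sym //.
  rewrite mulrA [_ * (wz t k * _)]mulrA mulrA; congr (_ * _).
  case: (posnP (k t)) => [k0|kpos].
    by rewrite (wz0 k0) (@wz0 t (incr k u)) ?(@incr_ne k u t ut) // !mulr0 mul0r.
  have tu : t != u by rewrite eq_sym.
  rewrite /wd /wz (decr_ne k tu) (incr_ne k ut) sg_incr (sg_decr u kpos).
  have := cb_tri ut; rewrite /cb; case pu: (pv u); case pt: (pv t) => //= H.
  + move: (H isT isT); rewrite /sg -(signr_odd _ (sc u _)) -(signr_odd _ (sc t _)).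
    case: (rk u < rk t)%N; case: (rk t < rk u)%N => //= _;
    case: (odd (sc u (decr k t))); case: (odd (sc t k)) => /=; ring.
  + ring.
  + ring.
  + ring.
Qed.
Lemma R2p (f : V) (t u : T) (k : K) :
  zz t (zz u f) k = (-1) ^+ (pv t && pv u) * zz u (zz t f) k.
Proof.
rewrite /zz decrC !mulrA; congr (_ * _).
case: (eqVneq t u) => [<-|tu].
  case pt: (pv t); last by rewrite /= expr0 mul1r.
  case: (posnP (k t)) => [k0|kpos]; first by rewrite (wz0 k0) !mulr0 mul0r.
  rewrite /wz pt decrE eqxx; move: kpos; case: (k t) => // c _.
  by rewrite subn1 /=; case: (odd c) => /=; ring.
have ut : u != t by rewrite eq_sym.
case: (posnP (k t)) => [k0|kpos].
  by rewrite (wz0 k0) (@wz0 t (decr k u)) ?(decr_ne k ut) // !mulr0 mul0r.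
case: (posnP (k u)) => [k0|kupos].
  by rewrite (wz0 k0) (@wz0 u (decr k t)) ?(decr_ne k tu) // !mulr0 mul0r.
rewrite /wz (decr_ne k tu) (decr_ne k ut) (sg_decr u kpos) (sg_decr t kupos).
have := cb_tri ut; rewrite /cb; case pu: (pv u); case pt: (pv t) => //= H.
+ move: (H isT isT); rewrite /sg -(signr_odd _ (sc u _)) -(signr_odd _ (sc t _)).
  case: (rk u < rk t)%N; case: (rk t < rk u)%N => //= _;
  case: (odd (sc u (decr k t))); case: (odd (sc t (decr k u))) => /=; ring.
+ ring.
+ ring.
+ ring.
Qed.

Lemma R3p (f : V) (t u : T) (k : K) :
  dd t (dd u f) k = (-1) ^+ (pv t && pv u) * dd u (dd t f) k.
Proof.
rewrite /dd incrC !mulrA; congr (_ * _).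
case: (eqVneq t u) => [<-|tu].
  case pt: (pv t); last by rewrite /= expr0 mul1r.
  rewrite /wd pt incrE eqxx addn1 /=.
  by case: (odd (k t)) => /=; ring.
have ut : u != t by rewrite eq_sym.
rewrite /wd (incr_ne k ut) (incr_ne k tu) (sg_incr u) (sg_incr t).
have := cb_tri ut; rewrite /cb; case pu: (pv u); case pt: (pv t) => //= H.
+ move: (H isT isT); rewrite /sg -(signr_odd _ (sc u _)) -(signr_odd _ (sc t _)).
  case: (rk u < rk t)%N; case: (rk t < rk u)%N => //= _;
  case: (odd (sc u k)); case: (odd (sc t k)) => /=; ring.
+ ring.
+ ring.
+ ring.
Qed.

Definition lin (A : V -> V) := forall (I : Type) (r : seq I) (c : I -> algC) (F : I -> V) (k : K),
  A (fun k' => \sum_(i <- r) c i * F i k') k = \sum_(i <- r) c i * A (F i) k.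

Lemma lin_zz t : lin (zz t).
Proof. by move=> I r c F k; rewrite /zz mulr_sumr; apply: eq_bigr => i _; rewrite mulrCA. Qed.
Lemma lin_dd t : lin (dd t).
Proof. by move=> I r c F k; rewrite /dd mulr_sumr; apply: eq_bigr => i _; rewrite mulrCA. Qed.
Lemma lin_id : lin id. Proof. by []. Qed.
Lemma lin_comp A B : lin A -> lin B -> lin (fun f => A (B f)).
Proof.
move=> hA hB I r c F k.
have -> : B (fun k' => \sum_(i <- r) c i * F i k') = fun k' => \sum_(i <- r) c i * B (F i) k'.
  by apply: functional_extensionality => k'; apply: hB.
exact: hA.
Qed.
Lemma lin_sum (J : Type) (s : seq J) (A : J -> V -> V) :
  (forall j, lin (A j)) -> lin (fun f k => \sum_(j <- s) A j f k).
Proof.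
move=> hA I r c F k /=.
rewrite (eq_bigr (fun j => \sum_(i <- r) c i * A j (F i) k)); last by move=> j _; apply: hA.
rewrite exchange_big /=; apply: eq_bigr => i _; by rewrite mulr_sumr.
Qed.

Lemma lin1 A (a : algC) (f : V) : lin A -> A (fun k => a * f k) = fun k => a * A f k.
Proof.
move=> hA; apply: functional_extensionality => k.
have := hA unit [:: tt] (fun _ => a) (fun _ => f) k; rewrite !big_seq1 => <-.
by congr A; apply: functional_extensionality => k'; rewrite big_seq1.
Qed.
Lemma lin2 A (a b : algC) (f g : V) : lin A ->
  A (fun k => a * f k + b * g k) = fun k => a * A f k + b * A g k.
Proof.
move=> hA; apply: functional_extensionality => k.
have := hA bool [:: true; false] (fun x => if x then a else b) (fun x => if x then f else g) k.
rewrite !big_cons !big_nil /= !addr0 => <-.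
by congr A; apply: functional_extensionality => k'; rewrite !big_cons big_nil /= addr0.
Qed.
Lemma lin0 A : lin A -> A (fun _ => 0) = fun _ => 0.
Proof.
move=> hA; apply: functional_extensionality => k.
by have := hA unit [::] (fun _ => 0) (fun _ => fun _ => 0) k; rewrite !big_nil; apply.
Qed.

Definition ddo (ou : option T) (f : V) : V := if ou is Some u then dd u f else f.
Definition pd (ou : option T) : bool := if ou is Some u then pv u else false.
Definition dlt (ou : option T) (t : T) : bool := if ou is Some u then u == t else false.
Definition E (t : T) (u : option T) (f : V) : V := zz t (ddo u f).

Lemma lin_ddo u : lin (ddo u).
Proof. by case: u => [u|] /=; [apply: lin_dd | apply: lin_id]. Qed.
Lemma lin_E t u : lin (E t u).
Proof. exact: lin_comp (lin_zz t) (lin_ddo u). Qed.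

Lemma R1f (f : V) (u : option T) (t : T) :
  ddo u (zz t f) = fun k => (dlt u t)%:R * f k + (-1) ^+ (pd u && pv t) * zz t (ddo u f) k.
Proof.
apply: functional_extensionality => k; case: u => [u|] /=; first exact: R1p.
by rewrite mul0r add0r expr0 mul1r.
Qed.
Lemma R2f (f : V) (t u : T) :
  zz t (zz u f) = fun k => (-1) ^+ (pv t && pv u) * zz u (zz t f) k.
Proof. by apply: functional_extensionality => k; apply: R2p. Qed.
Lemma R3f (f : V) (t u : option T) :
  ddo t (ddo u f) = fun k => (-1) ^+ (pd t && pd u) * ddo u (ddo t f) k.
Proof.
apply: functional_extensionality => k; case: t => [t|]; case: u => [u|] /=;
  rewrite ?andbF ?expr0 ?mul1r //; exact: R3p.
Qed.
Lemma Zd (g : V) (w : option T) (t : T) :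
  zz t (ddo w g) = fun k => (-1) ^+ (pd w && pv t) * ddo w (zz t g) k
                        + (- (-1) ^+ (pd w && pv t) * (dlt w t)%:R) * g k.
Proof.
apply: functional_extensionality => k; rewrite R1f.
by case: (pd w && pv t) => /=; ring.
Qed.

Lemma G1 (f : V) (t v : T) (u w : option T) (k : K) :
  E t u (E v w f) k = (dlt u v)%:R * E t w f k
    + (-1) ^+ ((pv t (+) pd u) && (pv v (+) pd w)) * E v w (E t u f) k
    - (-1) ^+ ((pv t (+) pd u) && (pv v (+) pd w)) * (dlt w t)%:R * E v u f k.
Proof.
rewrite /E R1f (lin2 _ _ _ _ (lin_zz t)) R2p (R3f f u w) (lin1 _ _ (lin_zz t)).
rewrite (lin1 _ _ (lin_zz v)) (Zd (ddo u f) w t) (lin2 _ _ _ _ (lin_zz v)).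
case: (pv t); case: (pd u); case: (pv v); case: (pd w) => /=; ring.
Qed.

Lemma G2 (f : V) (t v : T) (u : option T) (k : K) :
  E t u (zz v f) k = (dlt u v)%:R * zz t f k
    + (-1) ^+ ((pv t (+) pd u) && pv v) * zz v (E t u f) k.
Proof.
rewrite /E R1f (lin2 _ _ _ _ (lin_zz t)) R2p.
case: (pv t); case: (pd u); case: (pv v) => /=; ring.
Qed.

Lemma lin_sumF A (J : Type) (r : seq J) (F : J -> V) : lin A ->
  A (fun k => \sum_(j <- r) F j k) = fun k => \sum_(j <- r) A (F j) k.
Proof.
move=> hA; apply: functional_extensionality => k.
have := hA J r (fun _ => 1) F k.
rewrite (eq_bigr (fun j => A (F j) k)) => [<-|j _]; last by rewrite mul1r.
by congr A; apply: functional_extensionality => k'; apply: eq_bigr => j _; rewrite mul1r.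
Qed.

Definition pr (a : vidx m0 m1 n) : bool := if a is inl _ then true else false.
Definition xt (b : vidx m0 m1 n) : option 'I_n :=
  match b with inr (inr j) => Some j | _ => None end.
Definition terms (l : letter m0 m1 n) : seq (T * option T) :=
  [seq ((l.1, k), Some (l.2, k)) | k <- enum 'I_n] ++
  (if xt l.2 is Some j then [:: ((l.1, j), None)] else [::]).
Definition sig (l : letter m0 m1 n) (f : V) : V :=
  fun k => \sum_(x <- terms l) E x.1 x.2 f k.

Lemma lin_sig l : lin (sig l).
Proof. by apply: lin_sum => x; apply: lin_E. Qed.

Lemma terms_par l x : x \in terms l -> pv x.1 = pr l.1 /\ pd x.2 = pr l.2.
Proof.
case: l => a b; rewrite mem_cat => /orP[/mapP[k _ ->] //|].
by case: b => [?|[?|j]] //=; rewrite inE => /eqP ->.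
Qed.

Lemma sum_delta (I : eqType) (r : seq I) (k : I) (X : I -> algC) :
  uniq r -> k \in r -> \sum_(l <- r) (k == l)%:R * X l = X k.
Proof.
move=> ur kr; rewrite (bigD1_seq k) //= eqxx mul1r big1 ?addr0 // => l.
by rewrite eq_sym => /negbTE ->; rewrite mul0r.
Qed.

Lemma deltaA (a b c d : vidx m0 m1 n) (G : T -> option T -> algC) :
  \sum_(x <- terms (a, b)) \sum_(y <- terms (c, d)) (dlt x.2 y.1)%:R * G x.1 y.2
  = (b == c)%:R * \sum_(z <- terms (a, d)) G z.1 z.2.
Proof.
rewrite /terms /= big_cat /=.
have -> : \sum_(i <- (if xt b is Some j then [:: ((a, j), None)] else [::]))
    \sum_(y <- [seq ((c, k), Some (d, k)) | k <- enum 'I_n] ++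
              (if xt d is Some j then [:: ((c, j), None)] else [::]))
      (dlt i.2 y.1)%:R * G i.1 y.2 = 0.
  by case: (xt b) => [j|]; rewrite ?big_nil // big_seq1 /= big1 // => y _; rewrite mul0r.
rewrite addr0 big_map big_cat big_map mulrDr /=.
under eq_bigr => k _ do rewrite big_cat big_map /=.
rewrite big_split /=; congr (_ + _).
  case: (eqVneq b c) => [<-|bc].
    rewrite mul1r; apply: eq_bigr => k _.
    rewrite (eq_bigr (fun l => (k == l)%:R * G (a, k) (Some (d, l)))); last first.
      by move=> l _; rewrite xpair_eqE eqxx.
    by rewrite sum_delta ?enum_uniq ?mem_enum.
  rewrite mul0r big1 // => k _; rewrite big1 // => l _.
  by rewrite xpair_eqE (negbTE bc) mul0r.
case: (xt d) => [j|]; last by rewrite big_nil mulr0 big1 // => k _; rewrite big_nil.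
rewrite big_seq1 /=.
case: (eqVneq b c) => [<-|bc].
  rewrite mul1r (eq_bigr (fun k => (j == k)%:R * G (a, k) None)); last first.
    by move=> k _; rewrite big_seq1 /= xpair_eqE eqxx eq_sym.
  by rewrite sum_delta ?enum_uniq ?mem_enum.
rewrite mul0r big1 // => k _; rewrite big_seq1 /=.
by rewrite xpair_eqE (negbTE bc) mul0r.
Qed.

Lemma sig_sig l1 l2 f k :
  sig l1 (sig l2 f) k = \sum_(x <- terms l1) \sum_(y <- terms l2) E x.1 x.2 (E y.1 y.2 f) k.
Proof.
rewrite {1}/sig; apply: eq_bigr => x _.
by rewrite /sig (lin_sumF _ _ (lin_E _ _)).
Qed.

Lemma Rel (a b c d : vidx m0 m1 n) (f : V) (k : K) :
  sig (a, b) (sig (c, d) f) k =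
    (-1) ^+ ((pr a (+) pr b) && (pr c (+) pr d)) * sig (c, d) (sig (a, b) f) k
    + (b == c)%:R * sig (a, d) f k
    - (-1) ^+ ((pr a (+) pr b) && (pr c (+) pr d)) * (a == d)%:R * sig (c, b) f k.
Proof.
set s := (-1) ^+ _.
rewrite sig_sig.
rewrite (eq_big_seq (fun x => \sum_(y <- terms (c, d))
   ((dlt x.2 y.1)%:R * E x.1 y.2 f k + s * E y.1 y.2 (E x.1 x.2 f) k
    - s * ((dlt y.2 x.1)%:R * E y.1 x.2 f k)))); last first.
  move=> x xin; apply: eq_big_seq => y yin; rewrite G1.
  have [-> ->] := terms_par xin; have [-> ->] := terms_par yin.
  by rewrite /s /= !mulrA.
under eq_bigr => x _ do rewrite big_split /= big_split /= sumrN -!mulr_sumr.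
rewrite big_split /= big_split /= sumrN -!mulr_sumr.
rewrite (deltaA a b c d (fun t u => E t u f k)) /=.
rewrite (exchange_big _ (terms (a, b)) (terms (c, d))) /=.
rewrite [X in _ - s * X](exchange_big _ (terms (a, b)) (terms (c, d))) /=.
rewrite (deltaA c d a b (fun t u => E t u f k)) /= [d == a]eq_sym sig_sig.
rewrite /sig -!mulrA; ring.
Qed.

Definition act (w : seq (letter m0 m1 n)) (f : V) : V := foldr sig f w.
Lemma lin_act w : lin (act w).
Proof. elim: w => [|x w IH] /=; [exact: lin_id | exact: lin_comp (lin_sig x) IH]. Qed.
Lemma act_cat u v f : act (u ++ v) f = act u (act v f).
Proof. by rewrite /act foldr_cat. Qed.

Definition vac : V := fun k => (k == [ffun => 0%N])%:R.
Definition Phi (k : K) (x : fa m0 m1 n) : algC := \sum_(t <- x) t.1 * act t.2 vac k.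

Lemma odd_par (a : vidx m0 m1 n) : odd (parity a) = ~~ pr a.
Proof. by case: a => [?|[?|?]]. Qed.
Lemma sign_par (a b c d : vidx m0 m1 n) :
  (-1) ^+ ((parity a + parity b) * (parity c + parity d)) =
  (-1) ^+ ((pr a (+) pr b) && (pr c (+) pr d)) :> algC.
Proof.
rewrite -signr_odd oddM !oddD !odd_par.
by case: (pr a); case: (pr b); case: (pr c); case: (pr d).
Qed.
Lemma kronE bb : kron bb = bb%:R. Proof. by case: bb. Qed.

Lemma lin4 A (c1 c2 c3 c4 : algC) (f1 f2 f3 f4 : V) k : lin A ->
  c1 * A f1 k + c2 * A f2 k + c3 * A f3 k + c4 * A f4 k =
  A (fun k' => c1 * f1 k' + c2 * f2 k' + c3 * f3 k' + c4 * f4 k') k.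
Proof.
move=> hA.
have := hA _ [:: (c1, f1); (c2, f2); (c3, f3); (c4, f4)] fst snd k.
rewrite !big_cons big_nil /= => H.
transitivity (A (fun k' => \sum_(i <- [:: (c1, f1); (c2, f2); (c3, f3); (c4, f4)]) i.1 * i.2 k') k).
  by rewrite H !addrA addr0.
by congr A; apply: functional_extensionality => k'; rewrite !big_cons big_nil /= !addrA addr0.
Qed.

Lemma Phi_rel u v (a b c d : vidx m0 m1 n) k :
  Phi k (sandwich u (relator a b c d) v) = 0.
Proof.
rewrite /Phi /sandwich big_map /relator !big_cons big_nil /= !act_cat /= sign_par !kronE.
set g := act v vac; set s := (-1) ^+ _.
rewrite addr0 !addrA lin4; last exact: lin_act.
have -> : (fun k' => 1 * sig (a, b) (sig (c, d) g) k' + - s * sig (c, d) (sig (a, b) g) k' +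
   - (b == c)%:R * sig (a, d) g k' + s * (a == d)%:R * sig (c, b) g k') = fun _ => 0.
  by apply: functional_extensionality => k'; rewrite Rel /s; ring.
by rewrite (lin0 (lin_act u)).
Qed.

Definition deg (g : vidx m0 m1 n) (k : K) : nat := (\sum_(l < n) k (g, l))%N.
Definition supp (g : vidx m0 m1 n) (d : int) (f : V) :=
  forall k, f k != 0 -> (deg g k)%:Z = d.

Lemma deg_incr g k (t : T) : deg g (incr k t) = (deg g k + (t.1 == g))%N.
Proof.
rewrite /deg (eq_bigr (fun l => k (g, l) + ((g, l) == t))%N); last by move=> l _; rewrite ffunE.
rewrite big_split /=; congr (_ + _)%N.
case: t => a l0 /=; case: (eqVneq a g) => [->|ag].
  rewrite (bigD1 l0) //= eqxx big1 // => l /negbTE ln.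
  by rewrite xpair_eqE ln andbF.
by rewrite big1 // => l _; rewrite xpair_eqE eq_sym (negbTE ag).
Qed.

Lemma wz_pos t k : wz t k != 0 -> (0 < k t)%N.
Proof. by apply: contraR; rewrite -eqn0Ngt => /eqP /wz0 ->; rewrite eqxx. Qed.

Lemma supp_zz g d f t : supp g d f -> supp g (d + (t.1 == g)%:Z) (zz t f).
Proof.
move=> hf k; rewrite /zz mulf_eq0 negb_or => /andP[/wz_pos kt /hf].
by rewrite -{2}(incr_decr kt) deg_incr PoszD => ->.
Qed.
Lemma supp_dd g d f t : supp g d f -> supp g (d - (t.1 == g)%:Z) (dd t f).
Proof.
move=> hf k; rewrite /dd mulf_eq0 negb_or => /andP[_ /hf].
by rewrite deg_incr PoszD => <-; rewrite addrK.
Qed.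
Lemma supp_neg g d f : supp g d f -> d < 0 -> f = fun _ => 0.
Proof.
move=> hf dneg; apply: functional_extensionality => k.
apply/eqP; apply: contraTT dneg => /hf <-; by rewrite -leNgt.
Qed.
Lemma supp_sum g d (J : eqType) (r : seq J) (F : J -> V) :
  (forall x, x \in r -> supp g d (F x)) -> supp g d (fun k => \sum_(x <- r) F x k).
Proof.
move=> hF k; case: (eqVneq (deg g k)%:Z d) => // hd.
rewrite big_seq big1 ?eqxx // => x xr.
case: (eqVneq (F x k) 0) => // /(hF x xr) Ed; by rewrite Ed eqxx in hd.
Qed.

Lemma prop_virt (g : vidx m0 m1 n) b j : is_virtual g -> xt b = Some j -> (b == g) = false.
Proof.
case: b => [?|[?|j']] //= gv [_]; apply/negbTE; apply: contraTneq gv => <-; by [].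
Qed.

Lemma supp_sig g d f (a b : vidx m0 m1 n) : is_virtual g -> supp g d f ->
  supp g (d + (a == g)%:Z - (b == g)%:Z) (sig (a, b) f).
Proof.
move=> gv hf; apply: supp_sum => x; rewrite mem_cat => /orP[/mapP[l _ ->]|].
  have := supp_zz (t:=(a, l)) (supp_dd (t:=(b, l)) hf); rewrite /= => H.
  by move=> k /H ->; rewrite /E /=; ring.
case xb: (xt b) => [j|] //; rewrite inE => /eqP -> /=.
rewrite (prop_virt gv xb) subr0.
exact: (supp_zz (t:=(a, j)) hf).
Qed.

Lemma zero_sig g d f (a b : vidx m0 m1 n) : is_virtual g -> supp g d f ->
  d - (b == g)%:Z < 0 -> sig (a, b) f = fun _ => 0.
Proof.
move=> gv hf dn; apply: functional_extensionality => k.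
rewrite /sig big1_seq // => x /andP[_]; rewrite mem_cat => /orP[/mapP[l _ ->]|].
  rewrite /E /= (supp_neg (supp_dd (t:=(b, l)) hf)) //.
  by rewrite (lin0 (lin_zz _)).
case xb: (xt b) => [j|] //; rewrite inE => /eqP -> /=.
move: dn; rewrite (prop_virt gv xb) subr0 => dn.
by rewrite /E /= (supp_neg hf dn) (lin0 (lin_zz _)).
Qed.

Lemma supp_act g w : is_virtual g ->
  supp g ((count (fun l => l.1 == g) w)%:Z - (count (fun l => l.2 == g) w)%:Z) (act w vac).
Proof.
move=> gv; elim: w => [|[a b] w IH] /=.
  move=> k; rewrite /vac pnatr_eq0 eqb0 negbK => /eqP ->.
  by rewrite /deg big1 // => l _; rewrite ffunE.
have := supp_sig (a:=a) (b:=b) gv IH; move=> H k /H ->.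
by rewrite !PoszD; ring.
Qed.

Lemma irr_act w : irregular w -> act w vac = fun _ => 0.
Proof.
case=> i [g [/andP[i1 isz] gv H]].
move: H isz i1; case: i => // i /= H isz _.
have tn := take_nth (g, g) isz.
set x := nth (g, g) (rev w) i in tn *.
move: H; rewrite tn -cats1 count_cat /=.
set p := take i (rev w); set q := drop i.+1 (rev w).
have ew : w = rev q ++ x :: rev p.
  have es : rev w = p ++ x :: q.
    by rewrite /p /q -{1}(cat_take_drop i.+1 (rev w)) tn cat_rcons.
  by rewrite -{1}[w]revK es rev_cat rev_cons cat_rcons.
rewrite ew act_cat /=.
clear tn ew; case: x => a b /= H.
rewrite (@zero_sig g _ _ a b gv (supp_act (w:=rev p) gv)); first exact: (lin0 (lin_act _)).
rewrite !count_rev; move: H.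
set A := count (fun l : letter m0 m1 n => l.1 == g) p; set B := count (fun l : letter m0 m1 n => l.2 == g) p.
case: (b == g); rewrite /= ?addn0 ?addn1; lia.
Qed.

Definition ext (m : monom n) : K :=
  [ffun t : T => if t.1 is inr (inr r) then m (r, t.2) else 0%N].
Definition FF (p : cpoly n) : V := fun k => \sum_(t <- p | ext t.2 == k) t.1.

Lemma ext_inj : injective ext.
Proof.
move=> a b H; apply/ffunP => [[r l]].
by have := congr1 (fun f : K => f (@prop m0 m1 n r, l)) H; rewrite !ffunE.
Qed.
Lemma FF_ext p m : FF p (ext m) = pcoef p m.
Proof. by apply: eq_bigl => t; rewrite (inj_eq ext_inj). Qed.
Lemma FF_cat p q k : FF (p ++ q) k = FF p k + FF q k.
Proof. by rewrite /FF big_cat. Qed.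
Lemma FF_pone : FF (pone n) = vac.
Proof.
apply: functional_extensionality => k; rewrite /FF /pone big_cons big_nil /vac /= addr0.
have -> : ext [ffun => 0%N] = [ffun => 0%N].
  by apply/ffunP; move=> [[?|[?|?]] ?]; rewrite /ext !ffunE /= ?ffunE.
by rewrite eq_sym; case: eqP.
Qed.

Lemma ext_inc (m : monom n) (ij : 'I_n * 'I_n) :
  ext [ffun k => (m k + (k == ij))%N] = incr (ext m) (@prop m0 m1 n ij.1, ij.2).
Proof.
apply/ffunP => [[a l]]; rewrite !ffunE /=; case: a => [?|[?|r]] //=.
by rewrite ffunE; congr (_ + _)%N; case: ij => i j; rewrite !xpair_eqE.
Qed.

Lemma FF_mulvar (ij : 'I_n * 'I_n) p :
  FF (pmulvar ij p) = zz (@prop m0 m1 n ij.1, ij.2) (FF p).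
Proof.
apply: functional_extensionality => k; rewrite /FF /pmulvar big_map /zz /wz /=.
under eq_bigl => t do rewrite ext_inc incr_eq.
case: (0 < k _)%N => /=; first by rewrite mul1r.
by rewrite mul0r big_pred0.
Qed.

Lemma key_id (X k : K) (t u : T) :
  ((incr (decr X u) t == k) * X u =
   ((0 < k t) && (X == incr (decr k t) u)) * (decr k t u).+1)%N.
Proof.
case: (posnP (X u)) => [X0|Xpos].
  rewrite X0 muln0; case: eqP => [XE|]; last by rewrite andbF.
  by move: X0; rewrite XE incrE eqxx addn1.
rewrite incr_eq; case: (0 < k t)%N => //=.
case: (eqVneq X (incr (decr k t) u)) => [XE|XN].
  by rewrite {1}XE decr_incr eqxx XE incrE eqxx addn1.
case: eqP => // E; case/eqP: XN.
by rewrite -E incr_decr.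
Qed.

Lemma ext_nm (t : algC * monom n) (i j : 'I_n) l :
  ext [ffun x => (t.2 x - (x == (j, l)) + (x == (i, l)))%N] =
  incr (decr (ext t.2) (@prop m0 m1 n j, l)) (@prop m0 m1 n i, l).
Proof.
apply/ffunP => [[a l']]; rewrite !ffunE /=; case: a => [?|[?|r]] //=.
by rewrite ffunE !xpair_eqE.
Qed.

Lemma ifE (c : bool) (a : algC) : (if c then a else 0) = c%:R * a.
Proof. by case: c; rewrite ?mul1r ?mul0r. Qed.

Lemma FF_Dl (ij : 'I_n * 'I_n) p k :
  FF (pDl ij p) k = \sum_(l <- enum 'I_n)
     zz (@prop m0 m1 n ij.1, l) (dd (@prop m0 m1 n ij.2, l) (FF p)) k.
Proof.
rewrite /FF /pDl big_flatten big_map /=.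
under eq_bigr => t _ do rewrite big_map big_mkcond /=.
rewrite exchange_big /=; apply: eq_bigr => l _.
rewrite /zz /dd /wz /wd /= mulr_sumr mulr_sumr [RHS]big_mkcond; apply: eq_bigr => t _ /=.
rewrite ext_nm !ifE.
set X := ext t.2; set u := (@prop m0 m1 n ij.2, l); set v := (@prop m0 m1 n ij.1, l).
have Xu : X u = t.2 (ij.2, l) by rewrite /X ffunE.
have := key_id X k v u; rewrite -Xu => /(congr1 (fun x : nat => x%:R : algC)).
rewrite !natrM => H.
transitivity (t.1 * ((incr (decr X u) v == k)%:R * (X u)%:R)); first by rewrite Xu; ring.
rewrite H -mulnb natrM; ring.
Qed.

Lemma FF_rho (ij : 'I_n * 'I_n) p :
  FF (rho ij p) = sig (@prop m0 m1 n ij.1, @prop m0 m1 n ij.2) (FF p).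
Proof.
apply: functional_extensionality => k.
rewrite /rho FF_cat FF_Dl FF_mulvar [in RHS]/sig [in RHS]/terms [RHS]big_cat [in RHS]big_map [in RHS]big_seq1.
by [].
Qed.

Definition embw (w : seq ('I_n * 'I_n)) : seq (letter m0 m1 n) :=
  [seq (@prop m0 m1 n l.1, @prop m0 m1 n l.2) | l <- w].

Lemma FF_tau w : FF (tau_one w) = act (embw w) vac.
Proof.
elim: w => [|l w IH] /=; first exact: FF_pone.
by rewrite FF_rho IH.
Qed.

Definition ind (k0 : K) : V := fun k => (k == k0)%:R.
Definition mk (s : seq T) : K := [ffun u => count_mem u s].

Lemma mk_cons s t : incr (mk s) t = mk (t :: s).
Proof. by apply/ffunP => u; rewrite !ffunE /= addnC eq_sym. Qed.
Lemma mk_perm s1 s2 : perm_eq s1 s2 -> mk s1 = mk s2.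
Proof. by move/permP => H; apply/ffunP => u; rewrite !ffunE H. Qed.
Lemma vac_ind : vac = ind (mk [::]).
Proof.
have -> : mk [::] = [ffun => 0%N] by apply/ffunP => u; rewrite !ffunE.
by [].
Qed.

Lemma zz_ind t k0 : pv t = false -> zz t (ind k0) = ind (incr k0 t).
Proof.
move=> pt; apply: functional_extensionality => k; rewrite /zz /wz pt /ind.
rewrite [k == _]eq_sym incr_eq eq_sym.
by case: (0 < k t)%N; rewrite /= ?mul1r ?mul0r.
Qed.
Lemma dd_ind t k0 : pv t = false -> dd t (ind k0) = fun k => (k0 t)%:R * ind (decr k0 t) k.
Proof.
move=> pt; apply: functional_extensionality => k; rewrite /dd /wd pt /ind incr_eq.
case: (posnP (k0 t)) => [->|kpos] /=; first by rewrite !mul0r mulr0.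
case: eqP => [->|_]; last by rewrite !mulr0.
by rewrite decrE eqxx subn1 (ltn_predK kpos).
Qed.

Lemma sig_ind (a b : vidx m0 m1 n) k0 : pr a = false -> pr b = false ->
  sig (a, b) (ind k0) = fun k => \sum_(l <- enum 'I_n)
     (k0 (b, l))%:R * ind (incr (decr k0 (b, l)) (a, l)) k
   + (if xt b is Some j then ind (incr k0 (a, j)) k else 0).
Proof.
move=> pa pb; apply: functional_extensionality => k.
rewrite /sig /terms big_cat big_map /=; congr (_ + _).
  apply: eq_bigr => l _; rewrite /E /= dd_ind // (lin1 _ _ (lin_zz _)) zz_ind //.
case: (xt b) => [j|]; last by rewrite big_nil.
by rewrite big_seq1 /E /= zz_ind.
Qed.

Variables (h : nat) (ii jj : 'I_h -> 'I_n) (bb : 'I_h -> 'I_m1).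
Hypothesis binj : injective bb.

Local Notation bt k := (@beta m0 m1 n (bb k)).
Local Notation pp x := (@prop m0 m1 n x).

Lemma R_act r : act [seq (bt k, pp (jj k)) | k <- r] vac = ind (mk [seq (bt k, jj k) | k <- r]).
Proof.
elim: r => [|k r IH] /=; first exact: vac_ind.
rewrite IH sig_ind //; apply: functional_extensionality => x.
rewrite big1 ?add0r; first by rewrite /= mk_cons.
move=> l _; rewrite ffunE.
have -> : count_mem (pp (jj k), l) [seq (bt k0, jj k0) | k0 <- r] = 0%N.
  by apply/count_memPn; apply/mapP => [[k' _]] /(congr1 fst).
by rewrite mul0r.
Qed.

Lemma L_act r s0 : uniq r -> (forall k l, k \in r -> count_mem (bt k, l) s0 = 0%N) ->
  act [seq (pp (ii k), bt k) | k <- r] (ind (mk ([seq (bt k, jj k) | k <- r] ++ s0)))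
  = ind (mk ([seq (pp (ii k), jj k) | k <- r] ++ s0)).
Proof.
elim: r s0 => [|k r IH] s0 //= /andP[kr ur] hs0.
have e1 : mk ((bt k, jj k) :: [seq (bt k0, jj k0) | k0 <- r] ++ s0) =
          mk ([seq (bt k0, jj k0) | k0 <- r] ++ (bt k, jj k) :: s0).
  by apply: mk_perm; rewrite -cat1s perm_catCA.
rewrite e1 IH //; last first.
  move=> k' l k'r /=; rewrite hs0 ?inE ?k'r ?orbT // addn0.
  apply/eqP; rewrite eqb0; apply/negP => /eqP [/binj E _].
  by move: kr; rewrite E k'r.
rewrite sig_ind //; apply: functional_extensionality => x /=.
rewrite addr0.
set S := [seq (pp (ii k0), jj k0) | k0 <- r] ++ (bt k, jj k) :: s0.
rewrite (eq_bigr (fun l => (jj k == l)%:R * ind (incr (decr (mk S) (bt k, l)) (pp (ii k), l)) x)); last first.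
  move=> l _; rewrite ffunE /S count_cat /= hs0 ?inE ?eqxx // addn0.
  have -> : count_mem (bt k, l) [seq (pp (ii k0), jj k0) | k0 <- r] = 0%N.
    by apply/count_memPn; apply/mapP => [[k' _]] /(congr1 fst).
  by rewrite add0n xpair_eqE eqxx.
rewrite sum_delta ?enum_uniq ?mem_enum //.
have -> : mk S = incr (mk ([seq (pp (ii k0), jj k0) | k0 <- r] ++ s0)) (bt k, jj k).
  by rewrite mk_cons; apply: mk_perm; rewrite /S -cat1s perm_catCA.
by rewrite decr_incr mk_cons.
Qed.

Lemma FF_diag : FF (diag_monom ii jj) = ind (mk [seq (pp (ii k), jj k) | k <- enum 'I_h]).
Proof.
rewrite /diag_monom; elim: (enum 'I_h) => [|k r IH] /=; first by rewrite FF_pone vac_ind.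
by rewrite FF_mulvar IH zz_ind // mk_cons.
Qed.

Lemma capelli_act : act (capelli_word m0 ii jj bb) vac = FF (diag_monom ii jj).
Proof.
rewrite /capelli_word act_cat R_act FF_diag.
rewrite -[X in ind (mk X)]cats0 -[X in _ = ind (mk X)]cats0.
by rewrite L_act ?enum_uniq.
Qed.
End Model.

Section Span.
Variables m0 m1 n : nat.
Local Notation T := (vidx m0 m1 n * 'I_n)%type.
Local Notation K := {ffun T -> nat}.

Lemma sum_delta' (I : eqType) (r : seq I) (k : I) (X : I -> algC) :
  uniq r -> k \in r -> \sum_(l <- r) (k == l)%:R * X l = X k.
Proof.
move=> ur kr; rewrite (bigD1_seq k) //= eqxx mul1r big1 ?addr0 // => l.
by rewrite eq_sym => /negbTE ->; rewrite mul0r.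
Qed.

Lemma Phi_repr (k : K) (x : fa m0 m1 n) (W : seq (seq (letter m0 m1 n))) :
  uniq W -> {subset [seq t.2 | t <- x] <= W} ->
  Phi k x = \sum_(w <- W) fcoef x w * act w (@vac m0 m1 n) k.
Proof.
move=> uW sW; rewrite /fcoef.
under eq_bigr => w _ do rewrite big_distrl /= big_mkcond /=.
rewrite exchange_big /= /Phi big_seq [RHS]big_seq; apply: eq_bigr => t tx.
rewrite (eq_bigr (fun w => (t.2 == w)%:R * (t.1 * act w (@vac m0 m1 n) k))); last first.
  by move=> w _; case: eqP; rewrite ?mul1r ?mul0r.
rewrite sum_delta' //; apply: sW; exact: map_f.
Qed.

Lemma Phi_ker (k : K) g : ker_gen g -> Phi k g = 0.
Proof.
case=> [[u [v [a [b [c [d ->]]]]]] | [u [w [irr ->]]]]; first exact: Phi_rel.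
by rewrite /Phi big_seq1 /= act_cat irr_act // (lin0 (lin_act _)) mulr0.
Qed.

Lemma Phi_span (k : K) x : in_span (@ker_gen m0 m1 n) x -> Phi k x = 0.
Proof.
case=> gs [hG hC].
set W := undup ([seq t.2 | t <- x] ++ flatten [seq [seq t.2 | t <- g.2] | g <- gs]).
have uW : uniq W by apply: undup_uniq.
rewrite (@Phi_repr k x W uW); last by move=> w wx; rewrite mem_undup mem_cat wx.
under eq_bigr => w _ do rewrite hC big_distrl /=.
rewrite exchange_big /= big1_seq // => g /andP[_ gin].
under eq_bigr => w _ do rewrite -mulrA.
rewrite -mulr_sumr -(@Phi_repr k g.2 W uW); first by rewrite Phi_ker ?mulr0 //; apply: hG.
move=> w wg; rewrite mem_undup mem_cat; apply/orP; right.
by apply/flattenP; exists [seq t.2 | t <- g.2] => //; apply: map_f.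
Qed.
End Span.

Lemma pcoef_koszul n (P : gl_elt n) m :
  pcoef (koszul P) m = \sum_(t <- P) t.1 * pcoef (tau_one t.2) m.
Proof.
rewrite /pcoef /koszul big_flatten big_map; apply: eq_bigr => t _.
by rewrite /pscale big_map mulr_sumr.
Qed.

Theorem mainTheorem8 (n h : nat) (hpos : (1 <= h)%N) (i j : 'I_h -> 'I_n)
  (m0 m1 : nat) (b : 'I_h -> 'I_m1) (binj : injective b) (P : gl_elt n) :
  proj_rep (capelli_word m0 i j b) P ->
  forall m : monom n, pcoef (koszul P) m = pcoef (diag_monom i j) m.
Proof.
move=> hP m.
have H := @Phi_span m0 m1 n (@ext m0 m1 n m) _ hP.
move: H; rewrite /Phi /fa_sub_word big_cons /embed !big_map /= => H.
rewrite -[RHS](@FF_ext m0 m1 n) -(@capelli_act m0 m1 n h i j b binj).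
rewrite mul1r in H.
rewrite (_ : act _ _ _ = - \sum_(t <- P) - t.1 * act [seq (@prop m0 m1 n l.1, @prop m0 m1 n l.2) | l <- t.2] (@vac m0 m1 n) (@ext m0 m1 n m)); last first.
  by apply/eqP; rewrite -subr_eq0 opprK H.
rewrite pcoef_koszul -sumrN; apply: eq_bigr => t _.
by rewrite -(@FF_ext m0 m1 n) FF_tau mulNr opprK.
Qed.
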